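(* Let $n$ and $k$ be integers with $1\le k<n/2$. Then $\mathrm{DGP}(n,k)$ is edge-transitive if and only if $A(n,k)\neq B(n,k)$.
   Context: $\mathrm{DGP}(n,k)$ is the graph with vertex set $\{(u_i,j),(v_i,j): 0\le i\le n-1,\ j\in\{0,1\}\}$ and edges $\{(u_i,j),(u_{i+1},1-j)\}$, $\{(u_i,j),(v_i,1-j)\}$ (spokes, forming the set $\mathcal{S}$), $\{(v_i,j),(v_{i+k},1-j)\}$, subscripts mod $n$ (the canonical double cover of the generalized Petersen graph $\mathrm{GP}(n,k)$). $A(n,k)=\mathrm{Aut}(\mathrm{DGP}(n,k))$ and $B(n,k)$ is the setwise stabilizer of $\mathcal{S}$ in $A(n,k)$. *)

(* Defs.v *)
From mathcomp Require Import all_boot all_fingroup.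
Set Implicit Arguments.
Unset Strict Implicit.
Unset Printing Implicit Defensive.

(* Vertices of DGP(n,k): (side, i, j) where side = false means u_i,
   side = true means v_i, i : 'I_n, and j : bool is the layer (0 = false). *)
Definition dgp_vertex (n : nat) : finType := (bool * 'I_n * bool)%type.

Definition is_u (n : nat) (x : dgp_vertex n) : bool := ~~ x.1.1.
Definition is_v (n : nat) (x : dgp_vertex n) : bool := x.1.1.
Definition idx (n : nat) (x : dgp_vertex n) : nat := val x.1.2.
Definition lay (n : nat) (x : dgp_vertex n) : bool := x.2.

Definition outer_arc n (x y : dgp_vertex n) : bool :=
  [&& is_u x, is_u y, idx y == (idx x + 1) %% n & lay y == ~~ lay x].
Definition spoke_arc n (x y : dgp_vertex n) : bool :=
  [&& is_u x, is_v y, idx y == idx x & lay y == ~~ lay x].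
Definition inner_arc n k (x y : dgp_vertex n) : bool :=
  [&& is_v x, is_v y, idx y == (idx x + k) %% n & lay y == ~~ lay x].

Definition dgp_adj n k (x y : dgp_vertex n) : bool :=
  [|| outer_arc x y, outer_arc y x, spoke_arc x y, spoke_arc y x,
      inner_arc k x y | inner_arc k y x].

Definition dgp_edges n k : {set {set dgp_vertex n}} :=
  [set e : {set dgp_vertex n} |
    [exists x, exists y, dgp_adj k x y && (e == [set x; y])]].

Definition dgp_spokes n : {set {set dgp_vertex n}} :=
  [set e : {set dgp_vertex n} |
    [exists x, exists y, spoke_arc x y && (e == [set x; y])]].

Definition A_aut n k : {set {perm dgp_vertex n}} :=
  [set p : {perm dgp_vertex n} |
    [forall x, forall y, dgp_adj k (p x) (p y) == dgp_adj k x y]].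

Definition B_stab n k : {set {perm dgp_vertex n}} :=
  [set p in A_aut n k | [set (p @: e) | e : {set dgp_vertex n} in dgp_spokes n] == dgp_spokes n].

Definition edge_transitive n k : Prop :=
  forall e1 e2, e1 \in dgp_edges n k -> e2 \in dgp_edges n k ->
    exists2 p, p \in A_aut n k & p @: e1 = e2.

(* Main.v *)
Require Import Defs.
From mathcomp Require Import all_boot all_fingroup.
From Stdlib Require Import Classical.
Set Implicit Arguments.
Unset Strict Implicit.
Unset Printing Implicit Defensive.

Section S.
Variables (n k : nat).
Hypothesis n0 : 0 < n.
Local Notation V := (dgp_vertex n).
Local Notation A := (A_aut n k).

Definition mkv (s : bool) (i : nat) (j : bool) : V := (s, Ordinal (ltn_pmod i n0), j).

Lemma mkv_mod s i j : mkv s (i %% n) j = mkv s i j.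
Proof. rewrite /mkv; congr (_, _, _); apply: val_inj; rewrite /= modn_mod //. Qed.

Lemma mkv_ord s (i : 'I_n) j : mkv s i j = (s, i, j).
Proof. rewrite /mkv; congr (_, _, _); apply: val_inj; rewrite /= modn_small //. Qed.

Definition tr_fun (m : nat) (b : bool) (x : V) : V := mkv x.1.1 (idx x + m) (x.2 (+) b).

Lemma tr_inj m b : injective (tr_fun m b).
Proof.
move=> [[s i] j] [[s' i'] j'] E.
have E1 := congr1 (fun x : V => x.1.1) E.
have E2 := congr1 (fun x : V => val x.1.2) E.
have E3 := congr1 (fun x : V => x.2 (+) b) E.
move: E1 E2 E3; rewrite /tr_fun /= !addbK => -> /eqP E2 ->.
congr (_, _, _); apply: val_inj; apply/eqP.
by move: E2; rewrite /idx /= eqn_modDr !modn_small.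
Qed.

Definition tr m b : {perm V} := perm (@tr_inj m b).

Lemma trE m b x : tr m b x = tr_fun m b x.
Proof. by rewrite permE. Qed.

Lemma tr_mkv m b s i j : tr m b (mkv s i j) = mkv s (i + m) (j (+) b).
Proof. by rewrite trE /tr_fun /idx /= -(mkv_mod s (_ + m)) modnDml mkv_mod. Qed.

Lemma key a b c m : b < n -> ((b + m) %% n == ((a + m) %% n + c) %% n) = (b == (a + c) %% n).
Proof.
move=> bn; rewrite modnDml addnAC -[b in RHS](modn_small bn); exact: eqn_modDr.
Qed.

Lemma key0 a b m : a < n -> b < n -> ((b + m) %% n == (a + m) %% n) = (b == a).
Proof.
move=> an bn; rewrite eqn_modDr !modn_small //.
Qed.

Lemma tr_adj m b x y : dgp_adj k (tr m b x) (tr m b y) = dgp_adj k x y.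
Proof.
rewrite !trE; case: x y => [[s i] j] [[s' i'] j'].
rewrite /dgp_adj /outer_arc /spoke_arc /inner_arc /is_u /is_v /idx /lay /tr_fun /=.
rewrite !key ?key0 ?ltn_ord //.
by case: s s' j j' b => [] [] [] [] [].
Qed.


Lemma Aadj (p : {perm V}) x y : p \in A -> dgp_adj k (p x) (p y) = dgp_adj k x y.
Proof. by rewrite inE => /forallP /(_ x) /forallP /(_ y) /eqP. Qed.

Lemma AP (p : {perm V}) : (forall x y, dgp_adj k (p x) (p y) = dgp_adj k x y) -> p \in A.
Proof. by move=> H; rewrite inE; apply/forallP => x; apply/forallP => y; rewrite H. Qed.

Lemma A1 : (1%g : {perm V}) \in A.
Proof. by apply: AP => x y; rewrite !perm1. Qed.

Lemma AM (p q : {perm V}) : p \in A -> q \in A -> (p * q)%g \in A.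
Proof. by move=> pA qA; apply: AP => x y; rewrite !permM !Aadj. Qed.

Lemma AV (p : {perm V}) : p \in A -> p^-1%g \in A.
Proof. by move=> pA; apply: AP => x y; rewrite -(Aadj _ _ pA) !permKV. Qed.

Lemma Atr m b : tr m b \in A.
Proof. by apply: AP => x y; rewrite tr_adj. Qed.

Definition R (e1 e2 : {set V}) := exists2 p : {perm V}, p \in A & p @: e1 = e2.

Lemma R_refl e : R e e.
Proof. by exists 1%g; [exact: A1 | rewrite (eq_imset _ (@perm1 _)) imset_id]. Qed.

Lemma R_trans e1 e2 e3 : R e1 e2 -> R e2 e3 -> R e1 e3.
Proof.
move=> [p pA E1] [q qA E2]; exists (p * q)%g; first exact: AM.
by rewrite (eq_imset _ (permM p q)) imset_comp E1.
Qed.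

Lemma R_sym e1 e2 : R e1 e2 -> R e2 e1.
Proof.
move=> [p pA E]; exists p^-1%g; first exact: AV.
by rewrite -E -imset_comp (eq_imset _ (permK p)) imset_id.
Qed.

Lemma im2 (p : {perm V}) x y : p @: [set x; y] = [set p x; p y].
Proof. by rewrite imsetU1 imset_set1. Qed.

Definition arc_set (r : V -> V -> bool) (e : {set V}) := exists x y, r x y /\ e = [set x; y].
Definition is_spoke := arc_set (@spoke_arc n).
Definition is_outer := arc_set (@outer_arc n).
Definition is_inner := arc_set (@inner_arc n k).

Lemma edgesP e : e \in dgp_edges n k -> [\/ is_spoke e, is_outer e | is_inner e].
Proof.
rewrite inE => /existsP [x /existsP [y /andP [H /eqP ->]]].
move: H; rewrite /dgp_adj.
case/orP => [H|/orP [H|/orP [H|/orP [H|/orP [H|H]]]]].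
- by apply: Or32; exists x, y.
- by apply: Or32; exists y, x; rewrite setUC.
- by apply: Or31; exists x, y.
- by apply: Or31; exists y, x; rewrite setUC.
- by apply: Or33; exists x, y.
- by apply: Or33; exists y, x; rewrite setUC.
Qed.

Lemma edge_im (p : {perm V}) e : p \in A -> e \in dgp_edges n k -> p @: e \in dgp_edges n k.
Proof.
move=> pA; rewrite !inE => /existsP [x /existsP [y /andP [H /eqP ->]]].
by apply/existsP; exists (p x); apply/existsP; exists (p y); rewrite Aadj // H im2 eqxx.
Qed.

Lemma spoke_edge e : is_spoke e -> e \in dgp_edges n k.
Proof.
move=> [x [y [H ->]]]; rewrite inE; apply/existsP; exists x; apply/existsP; exists y.
by rewrite /dgp_adj H !orbT eqxx.
Qed.

Lemma adj_edge x y : dgp_adj k x y -> [set x; y] \in dgp_edges n k.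
Proof. by move=> H; rewrite inE; apply/existsP; exists x; apply/existsP; exists y; rewrite H eqxx. Qed.

Lemma outer_edge e : is_outer e -> e \in dgp_edges n k.
Proof. by move=> [x [y [H ->]]]; apply: adj_edge; rewrite /dgp_adj H. Qed.

Lemma inner_edge e : is_inner e -> e \in dgp_edges n k.
Proof. by move=> [x [y [H ->]]]; apply: adj_edge; rewrite /dgp_adj H !orbT. Qed.

Lemma spokesP e : (e \in dgp_spokes n) <-> is_spoke e.
Proof.
rewrite inE; split.
- by move=> /existsP [x /existsP [y /andP [H /eqP ->]]]; exists x, y.
- by move=> [x [y [H ->]]]; apply/existsP; exists x; apply/existsP; exists y; rewrite H eqxx.
Qed.

Definition s0 : {set V} := [set mkv false 0 false; mkv true 0 true].
Definition o0 : {set V} := [set mkv false 0 false; mkv false 1 true].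
Definition i0 : {set V} := [set mkv true 0 false; mkv true k true].

Lemma spokeR e : is_spoke e -> R s0 e.
Proof.
move=> [[[s i] j] [[[s' i'] j'] [H ->]]].
exists (tr i j); first exact: Atr.
move: H; rewrite /spoke_arc /is_u /is_v /idx /lay /= => /and4P [/negbTE -> -> /eqP E /eqP ->].
have -> : i' = i by apply: val_inj.
by rewrite im2 !tr_mkv add0n addFb addTb !mkv_ord.
Qed.

Lemma outerR e : is_outer e -> R o0 e.
Proof.
move=> [[[s i] j] [[[s' i'] j'] [H ->]]].
exists (tr i j); first exact: Atr.
move: H; rewrite /outer_arc /is_u /is_v /idx /lay /= => /and4P [/negbTE -> /negbTE -> /eqP E /eqP ->].
by rewrite im2 !tr_mkv add0n addFb addTb -(mkv_ord _ i') E mkv_mod addnC !mkv_ord.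
Qed.

Lemma innerR e : is_inner e -> R i0 e.
Proof.
move=> [[[s i] j] [[[s' i'] j'] [H ->]]].
exists (tr i j); first exact: Atr.
move: H; rewrite /inner_arc /is_u /is_v /idx /lay /= => /and4P [-> -> /eqP E /eqP ->].
by rewrite im2 !tr_mkv add0n addFb addTb -(mkv_ord _ i') E mkv_mod addnC !mkv_ord.
Qed.


Lemma adj_uv (a b : V) : is_u a -> ~~ is_u b -> dgp_adj k a b -> spoke_arc a b.
Proof.
case: a b => [[s i] j] [[s' i'] j'].
rewrite /dgp_adj /outer_arc /spoke_arc /inner_arc /is_u /is_v /=.
by case: s; case: s'; rewrite //= ?andbF ?orbF.
Qed.

Lemma u_spoke (Hu : forall (q : {perm V}) x, q \in A -> is_u (q x) = is_u x)
  (q : {perm V}) e : q \in A -> is_spoke e -> is_spoke (q @: e).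
Proof.
move=> qA [x [y [H ->]]]; exists (q x), (q y); split; last by rewrite im2.
apply: adj_uv.
- by rewrite Hu //; case/and4P: H.
- by rewrite Hu //; case/and4P: H => _ vy _ _; rewrite /is_u negbK.
- by rewrite Aadj // /dgp_adj H !orbT.
Qed.

Lemma u_pres (Hs : forall (q : {perm V}) x, q \in A -> is_u x -> is_u (q x))
  (q : {perm V}) x : q \in A -> is_u (q x) = is_u x.
Proof.
move=> qA; apply/idP/idP; last exact: Hs.
by move=> h; rewrite -(permK q x); apply: Hs h; exact: AV.
Qed.

Lemma outer_u (H : forall (q : {perm V}) e, q \in A -> is_outer e -> is_outer (q @: e))
  (q : {perm V}) x : q \in A -> is_u x -> is_u (q x).
Proof.
move=> qA ux.
have : is_outer [set x; mkv false (idx x + 1) (~~ lay x)].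
  by exists x, (mkv false (idx x + 1) (~~ lay x)); split => //; rewrite /outer_arc ux /= !eqxx.
move/(H q _ qA) => [a [b [Hab E]]].
have : q x \in [set a; b] by rewrite -E im2 !inE eqxx.
by rewrite !inE => /orP [/eqP -> | /eqP ->]; case/and4P: Hab.
Qed.

Lemma inner_v (H : forall (q : {perm V}) e, q \in A -> is_inner e -> is_inner (q @: e))
  (q : {perm V}) x : q \in A -> is_u x -> is_u (q x).
Proof.
move=> qA ux.
have Hs : forall (q : {perm V}) x, q \in A -> is_v x -> is_v (q x).
  move=> {}q {ux}x {}qA vx.
  have : is_inner [set x; mkv true (idx x + k) (~~ lay x)].
    by exists x, (mkv true (idx x + k) (~~ lay x)); split => //; rewrite /inner_arc vx /= !eqxx.
  move/(H q _ qA) => [a [b [Hab E]]].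
  have : q x \in [set a; b] by rewrite -E im2 !inE eqxx.
  by rewrite !inE => /orP [/eqP -> | /eqP ->]; case/and4P: Hab.
apply: contraNN ux => h.
have := Hs _ (q x) (AV qA) h; by rewrite permK.
Qed.

Lemma cls e : e \in dgp_edges n k -> R s0 e \/ R o0 e \/ R i0 e.
Proof.
by case/edgesP => [/spokeR|/outerR|/innerR]; auto.
Qed.

Lemma notB_ET (p : {perm V}) : p \in A -> p \notin B_stab n k -> edge_transitive n k.
Proof.
move=> pA pnB.
have [[q [e [qA se nse]]] | Hno] :=
  classic (exists (q : {perm V}) e, [/\ q \in A, is_spoke e & ~ is_spoke (q @: e)]); last first.
  exfalso; move/negP: pnB; apply; rewrite inE pA /=.
  have Hall : forall (q : {perm V}) e, q \in A -> is_spoke e -> is_spoke (q @: e).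
    by move=> q e qA se; apply: NNPP => ns; apply: Hno; exists q, e.
  apply/eqP/setP => f; apply/imsetP/idP.
  - by move=> [e eS ->]; apply/spokesP; apply: Hall pA _; apply/spokesP.
  - move=> fS; exists (p^-1%g @: f).
      by apply/spokesP; apply: Hall; [exact: AV | apply/spokesP].
    by rewrite -imset_comp (eq_imset _ (permKV p)) imset_id.
have Rse : forall (q : {perm V}) e, q \in A -> e \in dgp_edges n k -> R e (q @: e).
  by move=> q' e' qA' _; exists q'.
have X : R s0 o0 \/ R s0 i0.
  have := edge_im qA (spoke_edge se).
  case/edgesP => [//|ho|hi].
  - left; apply: R_trans (spokeR se) _; apply: R_trans (Rse _ _ qA (spoke_edge se)) _.
    exact/R_sym/outerR.
  - right; apply: R_trans (spokeR se) _; apply: R_trans (Rse _ _ qA (spoke_edge se)) _.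
    exact/R_sym/innerR.
have O : R o0 s0 \/ R o0 i0.
  have [[q' [e' [qA' oe' noe']]] | Hno] :=
    classic (exists (q : {perm V}) e, [/\ q \in A, is_outer e & ~ is_outer (q @: e)]); last first.
    exfalso; apply: nse; apply: u_spoke qA se; apply: u_pres; apply: outer_u.
    by move=> q1 e1 qA1 oe1; apply: NNPP => ns; apply: Hno; exists q1, e1.
  have ee := outer_edge oe'.
  have := edge_im qA' ee.
  case/edgesP => [hs|//|hi].
  - left; apply: R_trans (outerR oe') _; apply: R_trans (Rse _ _ qA' ee) _.
    exact/R_sym/spokeR.
  - right; apply: R_trans (outerR oe') _; apply: R_trans (Rse _ _ qA' ee) _.
    exact/R_sym/innerR.
have I : R i0 s0 \/ R i0 o0.
  have [[q' [e' [qA' oe' noe']]] | Hno] :=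
    classic (exists (q : {perm V}) e, [/\ q \in A, is_inner e & ~ is_inner (q @: e)]); last first.
    exfalso; apply: nse; apply: u_spoke qA se; apply: u_pres; apply: inner_v.
    by move=> q1 e1 qA1 oe1; apply: NNPP => ns; apply: Hno; exists q1, e1.
  have ee := inner_edge oe'.
  have := edge_im qA' ee.
  case/edgesP => [hs|ho|//].
  - left; apply: R_trans (innerR oe') _; apply: R_trans (Rse _ _ qA' ee) _.
    exact/R_sym/spokeR.
  - right; apply: R_trans (innerR oe') _; apply: R_trans (Rse _ _ qA' ee) _.
    exact/R_sym/outerR.
have [So Si] : R s0 o0 /\ R s0 i0.
  case: X => [so|si].
    split => //; case: I => [iS|io]; first exact: R_sym.
    exact: R_trans so (R_sym io).
  split => //; case: O => [os|oi]; first exact: R_sym.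
  exact: R_trans si (R_sym oi).
have Hs : forall e, e \in dgp_edges n k -> R s0 e.
  move=> f /cls [|[]] h //; [exact: R_trans So h | exact: R_trans Si h].
move=> e1 e2 /Hs h1 /Hs h2.
case: (R_trans (R_sym h1) h2) => p' p'A E; by exists p'.
Qed.


Lemma ET_notAB : edge_transitive n k -> A != B_stab n k.
Proof.
move=> ET; apply/eqP => AB.
have s0E : s0 \in dgp_edges n k by apply: spoke_edge; exists (mkv false 0 false), (mkv true 0 true); rewrite /spoke_arc /= !eqxx.
have o0E : o0 \in dgp_edges n k.
  by apply: outer_edge; exists (mkv false 0 false), (mkv false 1 true); rewrite /outer_arc /idx /= mod0n add0n !eqxx.
have [p pA E] := ET _ _ s0E o0E.
move: pA; rewrite AB inE => /andP [_ /eqP HB].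
have : o0 \in dgp_spokes n.
  rewrite -HB -E; apply/imsetP; exists s0 => //.
  by apply/spokesP; exists (mkv false 0 false), (mkv true 0 true); rewrite /spoke_arc /= !eqxx.
move/spokesP => [x [y [H Eo]]].
have : y \in o0 by rewrite Eo !inE eqxx orbT.
by rewrite /o0 !inE => /orP [/eqP Ey | /eqP Ey]; move: H; rewrite /spoke_arc Ey /= andbF.
Qed.

End S.

Theorem lemma5p6 (n k : nat) : 1 <= k -> 2 * k < n ->
  (edge_transitive n k <-> A_aut n k != B_stab n k).
Proof.
move=> k1 kn.
have n0 : 0 < n by exact: leq_ltn_trans (leq0n _) kn.
split; first exact: ET_notAB n0.
move=> AB.
have sBA : B_stab n k \subset A_aut n k by apply/subsetP => p; rewrite inE => /andP [].
have : ~~ (A_aut n k \subset B_stab n k).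
  by apply: contra AB => h; rewrite eqEsubset h sBA.
by case/subsetPn => p pA pnB; exact: (@notB_ET n k n0 p pA pnB).
Qed.
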